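(* Let $K\ge2$, $0<q<p$ with $p+(K-1)q=1$, and $\phi\in\Delta$ with $\phi_1\le\cdots\le\phi_K$. If $\theta$ is an MLE for $\phi$, then there exists $n\in\{0,\dots,K-1\}$ such that $\theta=\theta^{[n]}$.
   Context: $\Delta=\{\theta\in\mathbb{R}^K:\theta_i\ge0,\sum_i\theta_i=1\}$. $\mathcal{M}(\theta)_y=q+(p-q)\theta_y$. $\theta\in\Delta$ is an MLE for $\phi$ if it minimizes $D_{KL}(\phi,\mathcal{M}(\theta))=\sum_i\phi_i\log(\phi_i/\mathcal{M}(\theta)_i)$ (convention $0\log(0/\cdot)=0$) over $\Delta$. For sorted $\phi$ and $n\in\{0,\dots,K-1\}$: $\lambda^{[n]}=\frac{(p-q)\sum_{i>n}\phi_i}{1-nq}$, and $\theta^{[n]}\in\mathbb{R}^K$ is given by $\theta^{[n]}_i=0$ for $i\le n$ and $\theta^{[n]}_i=\frac{\phi_i}{\lambda^{[n]}}-\frac{q}{p-q}$ for $i>n$. *)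

(* Defs.v *)
From HB Require Import structures.
From mathcomp Require Import all_boot all_order all_algebra.
From mathcomp Require Import all_classical all_reals all_analysis.
Set Implicit Arguments. Unset Strict Implicit. Unset Printing Implicit Defensive.
Import Order.TTheory GRing.Theory Num.Theory.
Local Open Scope ring_scope.

(* Coordinates are indexed by 'I_K = {0,...,K-1}; paper index i (1-based)
   corresponds to ordinal i-1. *)

Definition in_simplex (R : realType) (K : nat) (theta : 'I_K -> R) : Prop :=
  (forall i, 0 <= theta i) /\ \sum_(i < K) theta i = 1.

Definition Mmodel (R : realType) (K : nat) (p q : R) (theta : 'I_K -> R) : 'I_K -> R :=
  fun y => q + (p - q) * theta y.

Definition KL (R : realType) (K : nat) (phi m : 'I_K -> R) : R :=
  \sum_(i < K) (if phi i == 0 then 0 else phi i * ln (phi i / m i)).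

Definition is_MLE (R : realType) (K : nat) (p q : R) (phi theta : 'I_K -> R) : Prop :=
  in_simplex theta /\
  forall theta' : 'I_K -> R, in_simplex theta' ->
    KL phi (Mmodel p q theta) <= KL phi (Mmodel p q theta').

(* lambda^[n] = (p - q) * sum_{i > n} phi_i / (1 - n q)   (paper indices 1-based:
   i > n  <->  ordinal i >= n). *)
Definition lambdaN (R : realType) (K : nat) (p q : R) (phi : 'I_K -> R) (n : nat) : R :=
  (p - q) * (\sum_(i < K | (n <= i)%N) phi i) / (1 - n%:R * q).

Definition thetaN (R : realType) (K : nat) (p q : R) (phi : 'I_K -> R) (n : nat) : 'I_K -> R :=
  fun i => if (i < n)%N then 0 else phi i / lambdaN p q phi n - q / (p - q).

(* Main.v *)
Require Import Defs.
From HB Require Import structures.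
From mathcomp Require Import all_boot all_order all_algebra.
From mathcomp Require Import all_classical all_reals all_analysis.
From mathcomp Require Import ring lra.
Import Order.TTheory GRing.Theory Num.Theory.
Local Open Scope ring_scope.

Lemma term_le (R : realType) (a m m' : R) : 0 <= a -> 0 < m -> 0 < m' ->
  (if a == 0 then 0 else a * ln (a / m')) - (if a == 0 then 0 else a * ln (a / m))
  <= a * (m / m' - 1).
Proof.
move=> a0 m0 m'0; have [->|an0] := eqVneq a 0; first by rewrite !mul0r subrr.
have ap : 0 < a by rewrite lt_def an0.
rewrite -mulrBr; apply: ler_wpM2l => //.
rewrite !ln_div ?posrE //.
have -> : ln a - ln m' - (ln a - ln m) = ln m - ln m' by ring.
rewrite -ln_div ?posrE //.
have := @le_ln1Dx R (m / m' - 1).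
have -> : 1 + (m / m' - 1) = m / m' by ring.
apply.
have : 0 < m / m' by rewrite divr_gt0.
lra.
Qed.
Lemma final_ineq (R : realType) (a b mi mj d : R) : 0 <= a -> 0 <= b ->
  0 < mi -> 0 < mj - d -> 0 < d -> d * (a + b) < a * mj - b * mi ->
  a * (mi / (mi + d) - 1) + b * (mj / (mj - d) - 1) < 0.
Proof.
move=> a0 b0 mi0 mjd d0 h.
have h1 : 0 < mi + d by lra.
have -> : a * (mi / (mi + d) - 1) + b * (mj / (mj - d) - 1)
   = d * (b * mi + b * d - a * mj + a * d) / ((mi + d) * (mj - d)).
  by field; apply/andP; split; rewrite gt_eqF.
rewrite pmulr_llt0 ?invr_gt0 ?mulr_gt0 // pmulr_rlt0 //; lra.
Qed.

Lemma exists_eps (R : realType) (t c G S : R) : 0 < t -> 0 < c -> 0 < G -> 0 <= S ->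
  exists e, [/\ 0 < e, e <= t & c * e * S < G].
Proof.
move=> t0 c0 G0 S0.
pose X := G / (c * (S + 1)).
have X0 : 0 < X by rewrite /X divr_gt0 // mulr_gt0 //; lra.
have hX : c * X * S = G - c * X by rewrite /X; field; rewrite gt_eqF //; lra.
have cX : 0 < c * X by rewrite mulr_gt0.
have [tX|Xt] := leP t X.
  exists t; split => //.
  have : c * t * S <= c * X * S.
    by rewrite ler_wpM2r // ler_wpM2l // ltW.
  lra.
exists X; split => //; [exact: ltW| lra].
Qed.

Lemma perturb (R : realType) (K : nat) (p q : R) (phi theta : 'I_K -> R) (i j : 'I_K) :
  0 < q -> q < p -> (forall k, 0 <= phi k) -> in_simplex theta -> i != j ->
  0 < theta j ->
  phi j * Mmodel p q theta i < phi i * Mmodel p q theta j ->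
  exists theta', in_simplex theta' /\
    KL phi (Mmodel p q theta') < KL phi (Mmodel p q theta).
Proof.
move=> q0 qp phi0 [th0 thS] ij thj h.
have pq0 : 0 < p - q by lra.
set m := Mmodel p q theta.
have m0 : forall k, 0 < m k.
  move=> k; rewrite /m /Mmodel; have := th0 k => ?.
  have : 0 <= (p - q) * theta k by rewrite mulr_ge0 // ltW.
  lra.
have [e [e0 et eG]] := @exists_eps R (theta j) (p - q) (phi i * m j - phi j * m i)
   (phi i + phi j) thj pq0 ltac:(by rewrite subr_gt0) ltac:(have := phi0 i; have := phi0 j; lra).
pose th' := fun k => theta k + (if k == i then e else 0) - (if k == j then e else 0).
have th'0 : forall k, 0 <= th' k.
  move=> k; rewrite /th'; have := th0 k.
  case: eqVneq => [->|ki]; first by rewrite (negbTE ij); lra.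
  case: eqVneq => [->|kj]; lra.
exists th'; split.
  split => //.
  rewrite /th' sumrB big_split /= thS -!big_mkcond /= !big_pred1_eq; ring.
set m' := Mmodel p q th'.
have m'0 : forall k, 0 < m' k.
  move=> k; rewrite /m' /Mmodel.
  have : 0 <= (p - q) * th' k by rewrite mulr_ge0 // ltW.
  lra.
rewrite -subr_lt0 /KL -sumrB.
apply: (@le_lt_trans _ _ (\sum_(k < K) phi k * (m k / m' k - 1))).
  by apply: ler_sum => k _; apply: term_le.
rewrite (bigD1 i) //= (bigD1 j) /=; last by rewrite eq_sym.
rewrite big1 ?addr0; last first.
  move=> k /andP[ki kj]; rewrite /m' /m /Mmodel /th' (negbTE ki) (negbTE kj).
  rewrite !addr0 subr0 divff ?subrr ?mulr0 //.
  by have := m0 k; rewrite /m /Mmodel => /gt_eqF ->.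
have -> : m' i = m i + (p - q) * e.
  by rewrite /m' /m /Mmodel /th' eqxx (negbTE ij); ring.
have -> : m' j = m j - (p - q) * e.
  by rewrite /m' /m /Mmodel /th' eqxx eq_sym (negbTE ij); ring.
apply: final_ineq => //.
- have : 0 < m' j := m'0 j.
  by rewrite /m' /m /Mmodel /th' eqxx eq_sym (negbTE ij) => ?; lra.
- by rewrite mulr_gt0.
Qed.

Lemma count_ge (R : realType) (K n : nat) : (n <= K)%N ->
  \sum_(k < K | (n <= k)%N) (1 : R) = (K - n)%:R.
Proof.
move=> nK.
rewrite -(big_mkord (fun k => (n <= k)%N) (fun _ => (1:R))).
rewrite (big_cat_nat (leq0n n) nK) /= big_nat_cond big1 ?add0r; last first.
  by move=> k /andP[/andP[_ kn]]; rewrite leqNgt kn.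
rewrite big_nat_cond.
rewrite (eq_bigl (fun k => (n <= k < K)%N && true)); last first.
  by move=> k; rewrite andbT andbC andbA andbb.
by rewrite -big_nat_cond sumr_const_nat.
Qed.

Theorem lemma2 (R : realType) (K : nat) (p q : R) (phi theta : 'I_K -> R) :
  (2 <= K)%N -> 0 < q -> q < p -> p + (K - 1)%:R * q = 1 ->
  in_simplex phi ->
  (forall i j : 'I_K, (i <= j)%N -> phi i <= phi j) ->
  is_MLE p q phi theta ->
  exists n : nat, (n < K)%N /\ theta = thetaN p q phi n.
Proof.
move=> K2 q0 qp hsum [phi0 phiS] mono [[th0 thS] opt].
have pq0 : 0 < p - q by lra.
set m := Mmodel p q theta.
have m0 : forall k, 0 < m k.
  move=> k; rewrite /m /Mmodel.
  have : 0 <= (p - q) * theta k by rewrite mulr_ge0 // ltW.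
  lra.
have L : forall i j, 0 < theta j -> phi i * m j <= phi j * m i.
  move=> i j tj; have [->|ij] := eqVneq i j; first by rewrite mulrC.
  rewrite leNgt; apply/negP => h.
  have [th' [s' lt]] := @perturb R K p q phi theta i j q0 qp phi0 (conj th0 thS) ij tj h.
  by have := opt th' s'; rewrite leNgt lt.
have [j0 tj0] : exists j, 0 < theta j.
  case: (pickP (fun j => 0 < theta j)) => [j tj|none]; first by exists j.
  exfalso; move: thS; rewrite big1 => [|k _]; last first.
    by apply/eqP; rewrite eq_le th0 andbT leNgt none.
  by move/eqP; rewrite eq_sym oner_eq0.
pose c := phi j0 / m j0.
have c0 : 0 <= c by rewrite /c divr_ge0 // ltW.
have hle : forall i, phi i <= c * m i.
  move=> i; rewrite /c mulrAC ler_pdivlMr //; exact: L.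
have heq : forall i, 0 < theta i -> phi i = c * m i.
  move=> i ti; apply/eqP; rewrite eq_le hle /=.
  rewrite /c mulrAC ler_pdivrMr //; exact: L.
have cp : 0 < c.
  rewrite lt_def c0 andbT; apply/negP => /eqP c00.
  move: phiS; rewrite big1 => [|k _]; last first.
    by apply/eqP; rewrite eq_le phi0 andbT; have := hle k; rewrite c00 mul0r.
  by move/eqP; rewrite eq_sym oner_eq0.
have th00 : forall k, ~~ (0 < theta k) -> theta k = 0.
  by move=> k; rewrite -leNgt => h; apply/eqP; rewrite eq_le h th0.
have up : forall i k : 'I_K, 0 < theta i -> (i <= k)%N -> 0 < theta k.
  move=> i k ti ik; apply/negPn/negP => /th00 tk.
  have h1 := hle k; rewrite /m /Mmodel tk mulr0 addr0 in h1.
  have h2 := mono _ _ ik; rewrite (heq i ti) /m /Mmodel in h2.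
  have : 0 < c * ((p - q) * theta i) by apply: mulr_gt0 => //; apply: mulr_gt0.
  rewrite mulrDr in h2; lra.
pose P := fun n => [exists i : 'I_K, (val i == n) && (0 < theta i)].
have exP : exists n, P n by exists (val j0); apply/existsP; exists j0; rewrite eqxx.
case: (ex_minnP exP) => n /existsP [i0 /andP [/eqP i0n ti0]] nmin.
have nK : (n < K)%N by rewrite -i0n ltn_ord.
have below : forall k : 'I_K, (k < n)%N -> theta k = 0.
  move=> k kn; apply: th00; apply/negP => tk.
  have Pk : P k by apply/existsP; exists k; rewrite eqxx tk.
  by have := nmin _ Pk; rewrite leqNgt kn.
have above : forall k : 'I_K, (n <= k)%N -> 0 < theta k.
  by move=> k nk; apply: (up i0) => //; rewrite i0n.
have sumth : \sum_(k < K | (n <= k)%N) theta k = 1.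
  rewrite -thS [RHS](bigID (fun k : 'I_K => (n <= k)%N)) /= [X in _ = _ + X]big1 ?addr0 //.
  by move=> k; rewrite -ltnNge; exact: below.
have sumphi : \sum_(k < K | (n <= k)%N) phi k = c * (1 - n%:R * q).
  rewrite (eq_bigr (fun k => c * m k)); last by move=> k /above /heq.
  rewrite -mulr_sumr /m /Mmodel big_split /= -mulr_sumr sumth.
  have -> : \sum_(i < K | (n <= i)%N) q = (K - n)%:R * q.
    have cg := @count_ge R K n (ltnW nK).
    rewrite -cg mulr_suml; apply: eq_bigr => i _; by rewrite mul1r.
  congr (_ * _).
  have K1 : (1 <= K)%N by apply: ltnW.
  move: hsum; rewrite (natrB _ K1) (natrB _ (ltnW nK)).
  by set kR := K%:R; set nR := n%:R => h; rewrite -[in RHS]h; ring.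
have id1 : 1 - n%:R * q = (K - n)%:R * q + (p - q).
  have K1 : (1 <= K)%N by apply: ltnW.
  move: hsum; rewrite (natrB _ K1) (natrB _ (ltnW nK)).
  by set kR := K%:R; set nR := n%:R => h; rewrite -[in LHS]h; ring.
have pos : 0 < 1 - n%:R * q.
  rewrite id1; have : 0 <= (K - n)%:R * q by rewrite mulr_ge0 // ltW.
  lra.
have lam : lambdaN p q phi n = (p - q) * c.
  by rewrite /lambdaN sumphi; field; rewrite gt_eqF.
exists n; split => //.
apply/funext => k; rewrite /thetaN; case: ltnP => kn; first exact: below.
have hk := heq k (above k kn); rewrite /m /Mmodel in hk.
rewrite lam hk; field.
by rewrite !gt_eqF.
Qed.
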